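(* Let $\mathbf{x}_1,\dots,\mathbf{x}_n\in\mathbb{R}^d$, $y_1,\dots,y_n\in\mathbb{R}$ and $\mathbf{v}\in\mathbb{R}^k$ be arbitrary. Any $\widetilde{\mathbf{W}}\in\mathbb{R}^{k\times d}$ satisfying $$\frac1n\sum_{i=1}^n\big(\mathbf{x}_i^T\widetilde{\mathbf{W}}^T\mathrm{diag}(\mathbf{v})\widetilde{\mathbf{W}}\mathbf{x}_i-y_i\big)\mathbf{x}_i\mathbf{x}_i^T=\mathbf{0}$$ is a global minimizer over $\mathbf{W}\in\mathbb{R}^{k\times d}$ of $\mathcal{L}(\mathbf{W})=\frac1{2n}\sum_{i=1}^n\big(\mathbf{x}_i^T\mathbf{W}^T\mathrm{diag}(\mathbf{v})\mathbf{W}\mathbf{x}_i-y_i\big)^2$. *)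

(* Defs.v *)
(* the statement is purely algebraic, stated over an
   arbitrary real field R (covers the reals). *)
From HB Require Import structures.
From mathcomp Require Import all_boot all_order all_algebra.
Set Implicit Arguments. Unset Strict Implicit. Unset Printing Implicit Defensive.
Import Order.TTheory GRing.Theory Num.Theory.
Local Open Scope ring_scope.

Definition quadW (R : pzRingType) (k d : nat) (W : 'M[R]_(k, d)) (v : 'rV[R]_k)
  (x : 'cV[R]_d) : R :=
  (x^T *m W^T *m diag_mx v *m W *m x) 0 0.

Definition lossL (R : fieldType) (n d k : nat) (x : 'I_n -> 'cV[R]_d)
  (y : 'I_n -> R) (v : 'rV[R]_k) (W : 'M[R]_(k, d)) : R :=
  (2 * n%:R)^-1 * \sum_(i < n) (quadW W v (x i) - y i) ^+ 2.

Definition gradM (R : fieldType) (n d k : nat) (x : 'I_n -> 'cV[R]_d)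
  (y : 'I_n -> R) (v : 'rV[R]_k) (W : 'M[R]_(k, d)) : 'M[R]_d :=
  (n%:R)^-1 *: \sum_(i < n) ((quadW W v (x i) - y i) *: (x i *m (x i)^T)).

(* Main.v *)
Require Import Defs.
From HB Require Import structures.
From mathcomp Require Import all_boot all_order all_algebra.
From mathcomp Require Import ring.
Import Order.TTheory GRing.Theory Num.Theory.
Local Open Scope ring_scope.

Theorem lemma6p1 (R : realFieldType) (n d k : nat)
  (x : 'I_n -> 'cV[R]_d) (y : 'I_n -> R) (v : 'rV[R]_k)
  (Wt : 'M[R]_(k, d)) :
  gradM x y v Wt = 0 ->
  forall W : 'M[R]_(k, d), lossL x y v Wt <= lossL x y v W.
Proof.
move=> hg W.
pose M (W : 'M[R]_(k, d)) := W^T *m diag_mx v *m W.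
have qE : forall W z, quadW W v z = \tr (M W *m (z *m z^T)).
  move=> W0 z; rewrite /quadW /M.
  have -> : z^T *m W0^T *m diag_mx v *m W0 *m z = z^T *m (W0^T *m diag_mx v *m W0 *m z).
    by rewrite !mulmxA.
  set A := W0^T *m diag_mx v *m W0.
  transitivity (\tr (z^T *m A *m z)).
    by rewrite /mxtrace big_ord1 mulmxA.
  by rewrite mxtrace_mulC mulmxA mxtrace_mulC.
pose r i := quadW Wt v (x i) - y i.
pose t i := quadW W v (x i) - quadW Wt v (x i).
have S0 : \sum_(i < n) r i * t i = 0.
  have hS : \sum_(i < n) (r i *: (x i *m (x i)^T)) = 0.
    have [n0|npos] := posnP n.
      by apply: big1 => i; have := ltn_ord i; move: (nat_of_ord i) => j; rewrite n0.
    move: hg; rewrite /gradM => /eqP; rewrite scaler_eq0 invr_eq0 pnatr_eq0.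
    by rewrite eqn0Ngt npos /= => /eqP.
  have : \tr ((M W - M Wt) *m \sum_(i < n) (r i *: (x i *m (x i)^T))) = 0.
    by rewrite hS mulmx0 mxtrace0.
  rewrite mulmx_sumr raddf_sum => h; rewrite -[RHS]h; apply: eq_bigr => i _.
  rewrite -scalemxAr /= mxtraceZ /t !qE mulmxBl raddfB /=.
  by [].
rewrite /lossL; apply: ler_wpM2l.
  by rewrite invr_ge0 mulr_ge0 // ler0n.
have -> : \sum_(i < n) (quadW W v (x i) - y i) ^+ 2
        = \sum_(i < n) (r i ^+ 2 + (2 * (r i * t i) + t i ^+ 2)).
  apply: eq_bigr => i _; rewrite /r /t.
  have -> : quadW W v (x i) - y i = (quadW Wt v (x i) - y i) + (quadW W v (x i) - quadW Wt v (x i)).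
    by ring.
  by ring.

rewrite -/r big_split /= lerDl big_split /= -mulr_sumr S0 mulr0 add0r.
by apply: sumr_ge0 => i _; apply: sqr_ge0.
Qed.
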